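(* Let $A\colon\mathbb{R}_{>0}\to\mathbb{R}_{>0}$ be continuous with $\lim_{x\to\infty}A(x)=0$, and suppose $A$ has a convex differentiable tail, i.e., there is $x_0$ such that $A$ restricted to $(x_0,\infty)$ is convex and differentiable. Let $(a_t)_{t\ge1}$ be a sequence in $\mathbb{R}_{>0}$ satisfying $a_{t+1}=a_t+A(a_t)$ for all $t$, and let $f\colon\mathbb{R}_{>0}\to\mathbb{R}_{>0}$ be a function with $f'(t)=A(f(t))$ for all sufficiently large $t$. Then $\lim_{t\to\infty} f(t)/a_t=1$. *)

(* Defs.v *)
From Stdlib Require Import Reals.
Open Scope R_scope.

Definition convex_on_tail (A : R -> R) (x0 : R) : Prop :=
  forall x y l, x0 < x -> x0 < y -> 0 <= l <= 1 ->
    A (l * x + (1 - l) * y) <= l * A x + (1 - l) * A y.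

(* Main.v *)
Require Import Defs.
From Stdlib Require Import Reals Lra Lia.
Open Scope R_scope.

Lemma chord (A : R -> R) x0 (hc : convex_on_tail A x0) u x y :
  x0 < u -> u < x -> x < y -> A x + (y-x)*(A x - A u)/(x-u) <= A y.
Proof.
  intros hu hux hxy.
  set (lm := (y-x)/(y-u)).
  assert (hl : 0 <= lm <= 1).
  { unfold lm; split. left; apply Rdiv_lt_0_compat; lra.
    apply Rmult_le_reg_r with (y-u); [lra|]. unfold Rdiv; rewrite Rmult_assoc, Rinv_l; lra. }
  assert (hx : lm*u + (1-lm)*y = x).
  { unfold lm; field_simplify; [|lra]. field_simplify_eq; [ring|lra]. }
  pose proof (hc u y lm hu ltac:(lra) hl) as H. rewrite hx in H.
  assert (h1l : 1 - lm = (x-u)/(y-u)) by (unfold lm; field; lra).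
  rewrite h1l in H. unfold lm in H.
  apply Rmult_le_reg_r with (x-u); [lra|].
  apply Rmult_le_reg_r with (/(y-u)); [apply Rinv_0_lt_compat; lra|].
  replace ((A x + (y - x) * (A x - A u) / (x - u)) * (x - u) * / (y - u))
    with (A x - (y-x)/(y-u) * A u) by (field; lra).
  replace (A y * (x - u) * / (y - u)) with ((x-u)/(y-u) * A y) by (field; lra).
  lra.
Qed.

Lemma decr (A : R -> R) x0 (hc : convex_on_tail A x0)
  (hApos : forall x, 0 < x -> 0 < A x) (hx0 : 0 <= x0)
  (hAlim : forall eps, 0 < eps -> exists M, forall x, M < x -> Rabs (A x) < eps) :
  forall x y, x0 < x -> x <= y -> A y <= A x.
Proof.
  intros x y hx hxy. destruct (Rle_lt_dec (A y) (A x)) as [h|h]; auto.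
  destruct hxy as [hxy|hxy]; [|subst; lra].
  exfalso. destruct (hAlim 1 ltac:(lra)) as [M HM].
  set (s := (A y - A x)/(y-x)).
  assert (hs : 0 < s) by (unfold s; apply Rdiv_lt_0_compat; lra).
  set (z := Rmax (M+1) (y + 1/s + 1)).
  assert (hz1 : M < z) by (unfold z; pose proof (Rmax_l (M+1) (y+1/s+1)); lra).
  assert (hz2 : y + 1/s < z) by (unfold z; pose proof (Rmax_r (M+1) (y+1/s+1)); lra).
  pose proof (chord A x0 hc x y z hx hxy ltac:(assert (0<1/s) by (apply Rdiv_lt_0_compat; lra); lra)) as Hc.
  assert (Hk : (z-y)*(A y - A x)/(y-x) = (z-y)*s) by (unfold s; field; lra).
  rewrite Hk in Hc.
  assert (1 < (z-y)*s).
  { apply Rmult_lt_reg_r with (/s). apply Rinv_0_lt_compat; lra.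
    rewrite Rmult_assoc, Rinv_r, Rmult_1_r by lra. unfold Rdiv in hz2. lra. }
  specialize (HM z hz1). pose proof (hApos y ltac:(lra)). pose proof (Rle_abs (A z)). lra.
Qed.

Lemma chord1 (A : R -> R) x0 (hc : convex_on_tail A x0) x y :
  x0 < x - 1 -> x <= y -> A x - (y-x)*(A (x-1) - A x) <= A y.
Proof.
  intros h1 [h2|h2]; [|subst; lra].
  pose proof (chord A x0 hc (x-1) x y h1 ltac:(lra) h2) as H.
  replace (x - (x-1)) with 1 in H by ring. lra.
Qed.

Lemma Amin (A : R -> R) (hApos : forall x, 0 < x -> 0 < A x)
  (hAcont : forall x, 0 < x -> continuity_pt A x) p q :
  0 < p -> p <= q -> exists mu, 0 < mu /\ forall z, p <= z <= q -> mu <= A z.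
Proof.
  intros hp hpq. destruct (continuity_ab_min A p q hpq) as [m [Hm Hm2]].
  { intros c hc; apply hAcont; lra. }
  exists (A m); split; [apply hApos; lra|]. exact Hm.
Qed.

Lemma MV (A f : R -> R) T (hT : forall t, T < t -> derivable_pt_lim f t (A (f t))) s t :
  T < s -> s < t -> exists xi, s < xi < t /\ f t - f s = A (f xi) * (t - s).
Proof.
  intros h1 h2. destruct (MVT_cor2 f (fun z => A (f z)) s t h2) as [c [Hc1 Hc2]].
  { intros c hc; apply hT; lra. }
  exists c; split; auto.
Qed.

Lemma finc (A f : R -> R) T (hT : forall t, T < t -> derivable_pt_lim f t (A (f t)))
  (hApos : forall x, 0 < x -> 0 < A x) (hfpos : forall t, 0 < t -> 0 < f t) (hT0 : 0 <= T) s t :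
  T < s -> s <= t -> f s <= f t.
Proof.
  intros h1 [h2|h2]; [|subst; lra].
  destruct (MV A f T hT s t h1 h2) as [xi [Hx He]].
  assert (0 < A (f xi)) by (apply hApos, hfpos; lra).
  assert (0 < A (f xi) * (t - s)) by (apply Rmult_lt_0_compat; lra). lra.
Qed.

Lemma finf (A f : R -> R) T (hT : forall t, T < t -> derivable_pt_lim f t (A (f t)))
  (hApos : forall x, 0 < x -> 0 < A x) (hAcont : forall x, 0 < x -> continuity_pt A x)
  (hfpos : forall t, 0 < t -> 0 < f t) (hT0 : 0 <= T) M :
  exists t0, T < t0 /\ forall t, t0 <= t -> M < f t.
Proof.
  set (c := T + 1).
  assert (hfc : 0 < f c) by (apply hfpos; unfold c; lra).
  destruct (Rle_lt_dec M (f c)) as [hM|hM].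
  2:{
    destruct (Amin A hApos hAcont (f c) M hfc ltac:(lra)) as [mu [hmu Hmu]].
    set (t0 := c + (M - f c)/mu + 1).
    assert (0 < (M - f c)/mu) by (apply Rdiv_lt_0_compat; lra).
    exists t0; split; [unfold t0, c in *; lra|].
    intros t ht. destruct (Rlt_le_dec M (f t)) as [h|h]; auto. exfalso.
    destruct (MV A f T hT c t ltac:(unfold c; lra) ltac:(unfold t0 in ht; lra)) as [xi [Hx He]].
    assert (f c <= f xi) by (apply (finc A f T hT hApos hfpos hT0); unfold c in *; lra).
    assert (f xi <= f t) by (apply (finc A f T hT hApos hfpos hT0); unfold c in *; lra).
    specialize (Hmu (f xi) ltac:(lra)).
    assert (mu * (t - c) <= A (f xi) * (t - c)) by (apply Rmult_le_compat_r; unfold t0 in ht; lra).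
    assert (mu * (t - c) > M - f c).
    { assert (Hq : t - c > (M - f c)/mu) by (unfold t0 in ht; lra).
      apply Rmult_lt_compat_l with (r := mu) in Hq; auto.
      replace (mu * ((M - f c)/mu)) with (M - f c) in Hq by (field; lra). lra. }
    lra. }
  destruct (Amin A hApos hAcont (f c) (f c + 1) hfc ltac:(lra)) as [mu [hmu Hmu]].
  set (t0 := c + 1/mu + 1).
  assert (0 < 1/mu) by (apply Rdiv_lt_0_compat; lra).
  exists t0; split; [unfold t0, c in *; lra|].
  intros t ht. destruct (Rlt_le_dec (f c + 1) (f t)) as [h|h]; [lra|]. exfalso.
  destruct (MV A f T hT c t ltac:(unfold c; lra) ltac:(unfold t0 in ht; lra)) as [xi [Hx He]].
  assert (f c <= f xi) by (apply (finc A f T hT hApos hfpos hT0); unfold c in *; lra).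
  assert (f xi <= f t) by (apply (finc A f T hT hApos hfpos hT0); unfold c in *; lra).
  specialize (Hmu (f xi) ltac:(lra)).
  assert (mu * (t - c) <= A (f xi) * (t - c)) by (apply Rmult_le_compat_r; unfold t0 in ht; lra).
  assert (mu * (t - c) > 1).
  { assert (Hq : t - c > 1/mu) by (unfold t0 in ht; lra).
    apply Rmult_lt_compat_l with (r := mu) in Hq; auto.
    replace (mu * (1/mu)) with 1 in Hq by (field; lra). lra. }
  lra.
Qed.

Lemma aincr (A : R -> R) (a : nat -> R) (hApos : forall x, 0 < x -> 0 < A x)
  (hapos : forall t, (1 <= t)%nat -> 0 < a t)
  (harec : forall t, (1 <= t)%nat -> a (S t) = a t + A (a t)) :
  forall n k, (1 <= n)%nat -> a n <= a (n + k)%nat.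
Proof.
  intros n k hn. induction k as [|k IH]; [rewrite Nat.add_0_r; lra|].
  rewrite Nat.add_succ_r, harec by lia.
  pose proof (hApos _ (hapos (n+k)%nat ltac:(lia))). lra.
Qed.

Lemma ale (A : R -> R) (a : nat -> R) (hApos : forall x, 0 < x -> 0 < A x)
  (hapos : forall t, (1 <= t)%nat -> 0 < a t)
  (harec : forall t, (1 <= t)%nat -> a (S t) = a t + A (a t)) :
  forall n m, (1 <= n)%nat -> (n <= m)%nat -> a n <= a m.
Proof.
  intros n m hn hm. replace m with (n + (m - n))%nat by lia. apply (aincr A); auto.
Qed.

Lemma ainf (A : R -> R) (a : nat -> R) (hApos : forall x, 0 < x -> 0 < A x)
  (hAcont : forall x, 0 < x -> continuity_pt A x)
  (hapos : forall t, (1 <= t)%nat -> 0 < a t)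
  (harec : forall t, (1 <= t)%nat -> a (S t) = a t + A (a t)) M :
  exists N, (1 <= N)%nat /\ forall n, (N <= n)%nat -> M < a n.
Proof.
  assert (Hex : exists N, (1 <= N)%nat /\ M < a N).
  { destruct (Rlt_le_dec M (a 1%nat)) as [h|h]; [exists 1%nat; split; auto|].
    pose proof (hapos 1%nat (le_n _)) as ha1.
    destruct (Amin A hApos hAcont (a 1%nat) M ha1 h) as [mu [hmu Hmu]].
    destruct (INR_unbounded ((M - a 1%nat)/mu)) as [k Hk].
    exists (1 + k)%nat. split; [lia|].
    destruct (Rlt_le_dec M (a (1+k)%nat)) as [h2|h2]; auto. exfalso.
    assert (Hind : forall j, (j <= k)%nat -> a 1%nat + INR j * mu <= a (1 + j)%nat).
    { induction j as [|j IH]; intros hj.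
      - rewrite Nat.add_0_r. simpl INR. lra.
      - replace (1 + S j)%nat with (S (1 + j)) by lia. rewrite (harec (1+j)%nat) by lia.
        rewrite S_INR.
        assert (a (1+j)%nat <= M).
        { apply Rle_trans with (a (1+k)%nat); auto. apply (ale A); auto; lia. }
        specialize (IH ltac:(lia)).
        assert (mu <= A (a (1+j)%nat)) by (apply Hmu; split; [apply (ale A); auto; lia|auto]).
        lra. }
    specialize (Hind k (le_n _)).
    assert (INR k * mu > M - a 1%nat).
    { apply Rmult_lt_compat_r with (r := mu) in Hk; auto.
      replace ((M - a 1%nat) / mu * mu) with (M - a 1%nat) in Hk by (field; lra). lra. }
    lra. }
  destruct Hex as [N [hN HN]]. exists N; split; auto.
  intros n hn. apply Rlt_le_trans with (a N); auto. apply (ale A); auto.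
Qed.

Lemma phi_mono (A : R -> R) x0 (hc : convex_on_tail A x0)
  (hApos : forall x, 0 < x -> 0 < A x) (hx0 : 0 <= x0) X
  (hX : forall x, X <= x -> x0 < x - 1 /\ A (x - 1) <= 1) :
  forall x y, X <= x -> x <= y -> x + A x <= y + A y.
Proof.
  intros x y hx hxy. destruct (hX x hx) as [h1 h2].
  pose proof (chord1 A x0 hc x y h1 hxy).
  pose proof (hApos x ltac:(lra)).
  assert ((y - x) * (A (x-1) - A x) <= (y - x) * 1) by (apply Rmult_le_compat_l; lra).
  lra.
Qed.

Lemma abound (A : R -> R) (a : nat -> R) (hApos : forall x, 0 < x -> 0 < A x)
  (hapos : forall t, (1 <= t)%nat -> 0 < a t)
  (harec : forall t, (1 <= t)%nat -> a (S t) = a t + A (a t)) M1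
  (HM1 : forall x, M1 < x -> Rabs (A x) < 1) :
  forall n d, (1 <= n)%nat -> M1 < a n -> a (n + d)%nat <= a n + INR d.
Proof.
  intros n d hn hM. induction d as [|d IH]; [rewrite Nat.add_0_r; simpl; lra|].
  rewrite Nat.add_succ_r, harec by lia. rewrite S_INR.
  pose proof (aincr A a hApos hapos harec n d hn).
  specialize (HM1 (a (n+d)%nat) ltac:(lra)). pose proof (Rle_abs (A (a (n + d)%nat))). lra.
Qed.

Theorem lemma3 (A : R -> R) (a : nat -> R) (f : R -> R)
  (hApos : forall x, 0 < x -> 0 < A x)
  (hAcont : forall x, 0 < x -> continuity_pt A x)
  (hAlim : forall eps, 0 < eps -> exists M, forall x, M < x -> Rabs (A x) < eps)
  (hAtail : exists x0, 0 <= x0 /\ convex_on_tail A x0 /\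
              (forall x, x0 < x -> exists l, derivable_pt_lim A x l))
  (hapos : forall t, (1 <= t)%nat -> 0 < a t)
  (harec : forall t, (1 <= t)%nat -> a (S t) = a t + A (a t))
  (hfpos : forall t, 0 < t -> 0 < f t)
  (hfder : exists T, forall t, T < t -> derivable_pt_lim f t (A (f t))) :
  Un_cv (fun t => f (INR t) / a t) 1.
Proof.
  destruct hAtail as [x0 [hx0 [hconv _]]]. destruct hfder as [T0 hT0].
  set (T := Rmax T0 0).
  assert (hT : forall t, T < t -> derivable_pt_lim f t (A (f t))).
  { intros t ht; apply hT0. unfold T in ht; pose proof (Rmax_l T0 0); lra. }
  assert (hTp : 0 <= T) by (unfold T; apply Rmax_r).
  clearbody T. clear hT0 T0.
  pose proof (decr A x0 hconv hApos hx0 hAlim) as hdec.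
  pose proof (finc A f T hT hApos hfpos hTp) as hfinc.
  destruct (hAlim 1 ltac:(lra)) as [M1 HM1].
  intros eps heps.
  set (X := Rmax (x0 + 2) (M1 + 2)).
  assert (hX : forall x, X <= x -> x0 < x - 1 /\ A (x - 1) <= 1).
  { intros x hx. unfold X in hx. pose proof (Rmax_l (x0+2) (M1+2)). pose proof (Rmax_r (x0+2) (M1+2)).
    split; [lra|]. specialize (HM1 (x-1) ltac:(lra)). pose proof (Rle_abs (A (x-1))). lra. }
  assert (hXx0 : x0 < X) by (destruct (hX X (Rle_refl _)); lra).
  pose proof (phi_mono A x0 hconv hApos hx0 X hX) as hphi.
  destruct (finf A f T hT hApos hAcont hfpos hTp X) as [t0 [ht0 Ht0]].
  destruct (INR_unbounded t0) as [N0 HN0].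
  destruct (ainf A a hApos hAcont hapos harec (f (INR N0))) as [Na [hNa HNa]].
  assert (Hup : forall k, f (INR (N0 + k)) <= a (Na + k)%nat).
  { induction k as [|k IH].
    - rewrite !Nat.add_0_r. left; apply HNa; lia.
    - set (s := INR (N0 + k)).
      assert (hs : INR (N0 + S k) = s + 1) by (unfold s; rewrite <- S_INR; f_equal; lia).
      rewrite hs.
      assert (hst : t0 <= s) by (unfold s; rewrite plus_INR; pose proof (pos_INR k); lra).
      destruct (MV A f T hT s (s+1) ltac:(lra) ltac:(lra)) as [xi [Hxi He]].
      assert (f s <= f xi) by (apply hfinc; lra).
      pose proof (Ht0 s hst).
      assert (A (f xi) <= A (f s)) by (apply hdec; lra).
      pose proof (hphi (f s) (a (Na + k)%nat) ltac:(lra) IH).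
      replace (Na + S k)%nat with (S (Na + k)) by lia.
      rewrite (harec (Na + k)%nat) by lia.
      replace (s + 1 - s) with 1 in He by ring. lra. }
  destruct (ainf A a hApos hAcont hapos harec (Rmax M1 (INR Na / eps))) as [Nb [hNb HNb]].
  assert (Hup2 : forall n, (N0 <= n)%nat -> (Nb <= n)%nat -> f (INR n) <= a n + INR Na).
  { intros n h1 h2. replace n with (N0 + (n - N0))%nat by lia.
    set (k := (n - N0)%nat).
    assert (hM : M1 < a (N0 + k)%nat).
    { pose proof (Rmax_l M1 (INR Na / eps)). specialize (HNb (N0+k)%nat ltac:(unfold k; lia)). lra. }
    pose proof (Hup k).
    pose proof (ale A a hApos hapos harec (Na + k)%nat (N0 + k + Na)%nat ltac:(lia) ltac:(lia)).
    pose proof (abound A a hApos hapos harec M1 HM1 (N0+k)%nat Na ltac:(unfold k; lia) hM).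
    lra. }
  set (lam := 1 + eps/2).
  set (e2 := (lam - 1) / (lam * lam)).
  assert (he2 : 0 < e2) by (unfold e2, lam; apply Rdiv_lt_0_compat; nra).
  destruct (hAlim e2 he2) as [M2 HM2].
  set (X2 := Rmax X (M2 + 2)).
  assert (hX2X : X <= X2) by apply Rmax_l.
  assert (hX2 : forall x, X2 <= x -> A (x - 1) <= e2).
  { intros x hx. pose proof (Rmax_r X (M2+2)). specialize (HM2 (x-1) ltac:(unfold X2 in *; lra)).
    pose proof (Rle_abs (A (x-1))). lra. }
  destruct (ainf A a hApos hAcont hapos harec X2) as [N [hN HN]].
  destruct (finf A f T hT hApos hAcont hfpos hTp (a N)) as [c [hc Hc]].
  assert (hlam : 1 < lam) by (unfold lam; lra).
  assert (Hlow : forall k, a (N + k)%nat <= f (c + INR k * lam)).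
  { induction k as [|k IH].
    - rewrite Nat.add_0_r. simpl INR. rewrite Rmult_0_l, Rplus_0_r. left; apply Hc; lra.
    - set (s := c + INR k * lam).
      assert (hs : c + INR (S k) * lam = s + lam) by (unfold s; rewrite S_INR; ring).
      rewrite hs.
      assert (hcs : c <= s) by (unfold s; pose proof (pos_INR k); nra).
      destruct (MV A f T hT s (s+lam) ltac:(lra) ltac:(lra)) as [xi [Hxi He]].
      assert (h1 : f s <= f xi) by (apply hfinc; lra).
      assert (h2 : f xi <= f (s + lam)) by (apply hfinc; lra).
      pose proof (Hc s hcs) as hfs.
      assert (haN : X2 < a (N + k)%nat) by (apply HN; lia).
      assert (haN0 : X2 < a N) by (apply HN; lia).
      pose proof (hX (f s) ltac:(lra)) as [hx1 _].
      assert (h3 : A (f xi) <= A (f s)) by (apply hdec; lra).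
      assert (hD0 : 0 <= A (f s - 1) - A (f s)) by (pose proof (hdec (f s - 1) (f s) hx1 ltac:(lra)); lra).
      assert (hD1 : A (f s - 1) - A (f s) <= e2) by (pose proof (hX2 (f s) ltac:(lra)); pose proof (hApos (f s) ltac:(lra)); lra).
      pose proof (chord1 A x0 hconv (f s) (f xi) hx1 h1) as hch.
      replace (s + lam - s) with lam in He by ring.
      assert (h4 : f xi - f s <= lam * A (f s)) by (assert (A (f xi) * lam <= A (f s) * lam) by (apply Rmult_le_compat_r; lra); lra).
      assert (h5 : (f xi - f s) * (A (f s - 1) - A (f s)) <= (lam * A (f s)) * e2)
        by (apply Rmult_le_compat; lra).
      assert (h6 : lam * A (f s) * e2 = A (f s) - A (f s) / lam) by (unfold e2; field; lra).
      assert (h7 : A (f s)/lam <= A (f xi)). { apply Rle_trans with (A (f s) - lam * A (f s) * e2); [rewrite h6; lra|]. revert hch h5. generalize ((f xi - f s) * (A (f s - 1) - A (f s))). generalize (lam * A (f s) * e2). intros. lra. }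
      assert (h8 : lam * (A (f s)/lam) = A (f s)) by (field; lra).
      assert (h9 : lam * (A (f s)/lam) <= lam * A (f xi)) by (apply Rmult_le_compat_l; lra).
      pose proof (hphi (a (N + k)%nat) (f s) ltac:(lra) IH).
      replace (N + S k)%nat with (S (N + k)) by lia.
      rewrite (harec (N + k)%nat) by lia.
      nra. }
  assert (Hlow2 : forall n : nat, (N <= n)%nat -> c < INR n -> c * (1 + eps) <= INR n * (eps / 2) ->
            a n < (1 + eps) * f (INR n)).
  { intros n hn hcn hce.
    set (k := (n - N)%nat).
    assert (hk : a n <= f (c + INR k * lam)) by (replace n with (N + k)%nat at 1 by (unfold k; lia); apply Hlow).
    assert (hkn : INR k <= INR n) by (apply le_INR; unfold k; lia).
    pose proof (pos_INR k).
    assert (hk2 : f (c + INR k * lam) <= f (c + lam * INR n)) by (apply hfinc; nra).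
    set (m := INR n) in *.
    assert (hfm : a N < f m) by (apply Hc; lra).
    assert (haN0 : X2 < a N) by (apply HN; lia).
    pose proof (hX (f m) ltac:(lra)) as [hxm _].
    destruct (MV A f T hT m (c + lam * m) ltac:(lra) ltac:(nra)) as [xi [Hxi He]].
    assert (f m <= f xi) by (apply hfinc; lra).
    assert (hA1 : A (f xi) <= A (f m)) by (apply hdec; lra).
    assert (hup : f (c + lam * m) - f m <= A (f m) * (c + lam * m - m))
      by (rewrite He; apply Rmult_le_compat_r; nra).
    destruct (MV A f T hT c m hc hcn) as [xi' [Hxi' He']].
    assert (f c <= f xi') by (apply hfinc; lra).
    assert (f xi' <= f m) by (apply hfinc; lra).
    pose proof (Hc c (Rle_refl _)).
    assert (hA2 : A (f m) <= A (f xi')) by (apply hdec; lra).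
    assert (hlo : A (f m) * (m - c) <= f m - f c) by (rewrite He'; apply Rmult_le_compat_r; lra).
    assert (hfc0 : 0 < f c) by (apply hfpos; lra).
    pose proof (hApos (f m) ltac:(lra)) as hAm.
    assert (hq : c + lam * m - m <= eps * (m - c)) by (unfold lam; nra).
    assert (A (f m) * (c + lam * m - m) <= A (f m) * (eps * (m - c))) by (apply Rmult_le_compat_l; lra).
    assert (A (f m) * (eps * (m - c)) = eps * (A (f m) * (m - c))) by ring.
    assert (eps * (A (f m) * (m - c)) <= eps * (f m - f c)) by (apply Rmult_le_compat_l; lra).
    nra. }
  destruct (INR_unbounded (Rmax c (c * (1 + eps) / (eps / 2)))) as [Nc HNc].
  exists (Nat.max N0 (Nat.max Nb (Nat.max N Nc))).
  intros n hn. unfold ge in hn.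
  assert (hNcn : INR Nc <= INR n) by (apply le_INR; lia).
  pose proof (Rmax_l c (c * (1 + eps) / (eps / 2))).
  pose proof (Rmax_r c (c * (1 + eps) / (eps / 2))).
  assert (hce : c * (1 + eps) <= INR n * (eps / 2)).
  { assert (Hq : c * (1 + eps) / (eps / 2) <= INR n) by lra.
    apply Rmult_le_compat_r with (r := eps/2) in Hq; [|lra].
    replace (c * (1 + eps) / (eps / 2) * (eps / 2)) with (c * (1+eps)) in Hq by (field; lra). lra. }
  pose proof (Hlow2 n ltac:(lia) ltac:(lra) hce) as hL.
  pose proof (Hup2 n ltac:(lia) ltac:(lia)) as hU.
  pose proof (HNb n ltac:(lia)) as hB. pose proof (Rmax_r M1 (INR Na / eps)).
  assert (han : 0 < a n) by (apply hapos; lia).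
  assert (hNae : INR Na < eps * a n).
  { assert (Hq : INR Na / eps < a n) by lra.
    apply Rmult_lt_compat_l with (r := eps) in Hq; [|lra].
    replace (eps * (INR Na / eps)) with (INR Na) in Hq by (field; lra). lra. }
  set (r := f (INR n) / a n).
  assert (hr : f (INR n) = r * a n) by (unfold r; field; lra).
  unfold R_dist. rewrite hr in hU, hL. fold r.
  apply Rabs_def1.
  - nra.
  - assert (h1 : 1 * a n < ((1 + eps) * r) * a n) by lra.
    apply Rmult_lt_reg_r in h1; [|lra].
    assert (h2 : (1 - eps) * (1 + eps) < r * (1 + eps)) by nra.
    apply Rmult_lt_reg_r in h2; lra.
Qed.
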